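(* The generating function $$F_{(213,231)}(x,p,q,u,v,s,t)=\sum_{n\ge0}\ \sum_{\pi\in S_n(213,231)} x^n p^{\operatorname{asc}(\pi)}q^{\operatorname{des}(\pi)}u^{\operatorname{lrmax}(\pi)}v^{\operatorname{rlmax}(\pi)}s^{\operatorname{lrmin}(\pi)}t^{\operatorname{rlmin}(\pi)}$$ is equal to $\dfrac{A}{(1-ptux)(1-ptx-qvx)(1-qsvx)}$, where $$\begin{aligned}A={}&1 - p t x - p t u x - q v x - q s v x + s t u v x + p^2 t^2 u x^2 + p q s t v x^2 + p q t u v x^2 + p q s t u v x^2 - p s t^2 u v x^2 + q^2 s v^2 x^2\\ &- q s t u v^2 x^2 - p^2 q s t^2 u v x^3 - p q^2 s t u v^2 x^3 + p q s^2 t^2 u v^2 x^3 + p q s t^2 u^2 v^2 x^3 - p q s^2 t^2 u^2 v^2 x^3.\end{aligned}$$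
   Context: For $n\ge 0$, $S_n$ denotes the set of permutations $\pi=\pi_1\cdots\pi_n$ of $[n]=\{1,\dots,n\}$ ($S_0$ consists of the empty permutation, for which all statistics are $0$). $\pi$ avoids a pattern $\tau\in S_k$ if no subsequence $\pi_{i_1}\cdots\pi_{i_k}$ ($i_1<\dots<i_k$) satisfies $\pi_{i_a}<\pi_{i_b}\iff\tau_a<\tau_b$; $S_n(\tau,\rho)$ is the set of permutations in $S_n$ avoiding both $\tau$ and $\rho$. $\operatorname{asc}(\pi)$ (resp. $\operatorname{des}(\pi)$) is the number of $i\in[n-1]$ with $\pi_i<\pi_{i+1}$ (resp. $\pi_i>\pi_{i+1}$). $\pi_i$ is a left-to-right maximum (resp. minimum) if it is larger (resp. smaller) than every $\pi_j$ with $j<i$, and a right-to-left maximum (resp. minimum) if it is larger (resp. smaller) than every $\pi_j$ with $j>i$; $\operatorname{lrmax},\operatorname{lrmin},\operatorname{rlmax},\operatorname{rlmin}$ count these. *)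

(* Defs.v *)
From mathcomp Require Import all_boot all_order all_algebra all_fingroup.
Set Implicit Arguments. Unset Strict Implicit. Unset Printing Implicit Defensive.
Import GRing.Theory.

(* One-line notation of a permutation of 'I_n, as a sequence of values
   (0-based values 0..n-1; all statistics below are invariant under this shift). *)
Definition pword (n : nat) (pi : 'S_n) : seq nat := [seq val (pi i) | i <- enum 'I_n].

Definition contains (n : nat) (pi : 'S_n) (tau : seq nat) : bool :=
  [exists f : {ffun 'I_(size tau) -> 'I_n},
     [forall a : 'I_(size tau), forall b : 'I_(size tau),
        ((a < b)%N ==> (f a < f b)%N) &&
        (((pi (f a) < pi (f b))%N) == (nth 0 tau a < nth 0 tau b)%N)]].

Definition avoids (n : nat) (pi : 'S_n) (tau : seq nat) : bool := ~~ contains pi tau.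

Definition asc (w : seq nat) : nat := \sum_(i < (size w).-1) (nth 0 w i < nth 0 w i.+1)%N.
Definition des (w : seq nat) : nat := \sum_(i < (size w).-1) (nth 0 w i.+1 < nth 0 w i)%N.
Definition lrmax (w : seq nat) : nat :=
  \sum_(i < size w) all (fun y => y < nth 0 w i)%N (take i w).
Definition lrmin (w : seq nat) : nat :=
  \sum_(i < size w) all (fun y => nth 0 w i < y)%N (take i w).
Definition rlmax (w : seq nat) : nat :=
  \sum_(i < size w) all (fun y => y < nth 0 w i)%N (drop i.+1 w).
Definition rlmin (w : seq nat) : nat :=
  \sum_(i < size w) all (fun y => nth 0 w i < y)%N (drop i.+1 w).

Local Open Scope ring_scope.

Definition Fcoef (R : comRingType) (p q u v s t : R) (n : nat) : R :=
  \sum_(pi : 'S_n | avoids pi [:: 2; 1; 3]%N && avoids pi [:: 2; 3; 1]%N)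
    let w := pword pi in
    p ^+ asc w * q ^+ des w * u ^+ lrmax w * v ^+ rlmax w * s ^+ lrmin w * t ^+ rlmin w.

Definition Ftrunc (R : comRingType) (p q u v s t : R) (N : nat) : {poly R} :=
  \sum_(n < N.+1) (Fcoef p q u v s t n)%:P * 'X^n.

Definition mon (R : comRingType) (c : R) (k : nat) : {poly R} := c%:P * 'X^k.

Definition Anum (R : comRingType) (p q u v s t : R) : {poly R} :=
  1 - mon (p*t) 1 - mon (p*t*u) 1 - mon (q*v) 1 - mon (q*s*v) 1 + mon (s*t*u*v) 1
  + mon (p^+2*t^+2*u) 2 + mon (p*q*s*t*v) 2 + mon (p*q*t*u*v) 2 + mon (p*q*s*t*u*v) 2
  - mon (p*s*t^+2*u*v) 2 + mon (q^+2*s*v^+2) 2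
  - mon (q*s*t*u*v^+2) 2 - mon (p^+2*q*s*t^+2*u*v) 3 - mon (p*q^+2*s*t*u*v^+2) 3
  + mon (p*q*s^+2*t^+2*u*v^+2) 3 + mon (p*q*s*t^+2*u^+2*v^+2) 3
  - mon (p*q*s^+2*t^+2*u^+2*v^+2) 3.

Definition Aden (R : comRingType) (p q u v s t : R) : {poly R} :=
  (1 - mon (p*t*u) 1) * (1 - mon (p*t) 1 - mon (q*v) 1) * (1 - mon (q*s*v) 1).

(* Main.v *)
Require Import Defs.
From mathcomp Require Import all_boot all_order all_algebra all_fingroup.
From mathcomp Require Import ring zify.
Import GRing.Theory.


Fixpoint build (lo : nat) (c : seq bool) : seq nat :=
  match c with
  | [::] => [:: lo]
  | true :: c' => lo :: build lo.+1 c'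
  | false :: c' => (lo + (size c').+1) :: build lo c'
  end.

Fixpoint goodr (w : seq nat) : bool :=
  match w with
  | [::] => true
  | a :: w' => (all (fun y => a <= y) w' || all (fun y => y <= a) w') && goodr w'
  end.

Lemma build_perm lo c : perm_eq (build lo c) (iota lo (size c).+1).
Proof.
elim: c lo => [|b c IH] lo //=.
case: b.
  by rewrite /= perm_cons IH.
change (perm_eq (lo + (size c).+1 :: build lo c) (iota lo (size c).+2)).
have -> : iota lo (size c).+2 = iota lo (size c).+1 ++ [:: lo + (size c).+1].
  by rewrite -addn1 iotaD.
by rewrite perm_sym perm_catC /= perm_cons perm_sym IH.
Qed.

Lemma build_mem lo c x : x \in build lo c -> lo <= x <= lo + size c.
Proof.
by rewrite (perm_mem (build_perm lo c)) mem_iota; lia.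
Qed.

Lemma build_good lo c : goodr (build lo c).
Proof.
elim: c lo => [|b c IH] lo //=.
case: b => /=; rewrite IH andbT.
  by apply/orP; left; apply/allP => x /build_mem; lia.
by apply/orP; right; apply/allP => x /build_mem; lia.
Qed.

Lemma build_head lo c x : head x (build lo c) \in build lo c.
Proof. by case: c => [|[] c] /=; rewrite mem_head. Qed.

Lemma size_build lo c : size (build lo c) = (size c).+1.
Proof. by elim: c lo => [|[] c IH] lo //=; rewrite IH. Qed.

Lemma build_inj lo c1 c2 : build lo c1 = build lo c2 -> c1 = c2.
Proof.
elim: c1 lo c2 => [|b1 c1 IH] lo [|b2 c2] //.
- move/(congr1 size); rewrite [size (build lo [::])]/= size_build /= => ?; lia.
- move/(congr1 size); rewrite [size (build lo [::])]/= size_build /= => ?; lia.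
case: b1; case: b2 => /=.
- by move=> [] /IH ->.
- move=> [] E _; lia.
- move=> [] E _; lia.
- by move=> [] _ /IH ->.
Qed.

Lemma build_char lo m w :
  goodr w -> perm_eq w (iota lo m.+1) -> exists c, size c = m /\ w = build lo c.
Proof.
elim: m lo w => [|m IH] lo w.
  move=> _ Hp; exists [::]; split => //.
  have Hs := perm_size Hp; rewrite size_iota in Hs.
  case: w Hp Hs => [|a [|]] //= Hp _.
  by have := perm_mem Hp a; rewrite !inE eqxx /= => /esym/eqP ->.
case: w => [|a w]; first by move=> _ /perm_size; rewrite size_iota.
rewrite [goodr _]/= => /andP [Hg1 Hg2] Hp.
have Ha : lo <= a <= lo + m.+1.
  by have := perm_mem Hp a; rewrite mem_head mem_iota => /esym; lia.
have Hin : forall x, x \in iota lo m.+2 -> x != a -> x \in w.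
  by move=> x; rewrite -(perm_mem Hp) inE => /orP [->|].
case: (eqVneq a lo) => [Ea|Na].
  subst a; move: Hp; rewrite perm_cons => Hp.
  have [c [Hc ->]] := IH _ _ Hg2 Hp.
  by exists (true :: c); rewrite /= Hc.
case: (eqVneq a (lo + m.+1)) => [Ea|Nb].
  have E2 : iota lo m.+2 = iota lo m.+1 ++ [:: lo + m.+1] by rewrite -addn1 iotaD.
  move: Hp; rewrite E2 perm_sym perm_catC /= -Ea perm_cons perm_sym => Hp.
  have [c [Hc ->]] := IH _ _ Hg2 Hp.
  by exists (false :: c); rewrite /= Hc Ea.
have H1 : lo \in w by apply: Hin; rewrite ?mem_iota //; lia.
have H2 : lo + m.+1 \in w by apply: Hin; rewrite ?mem_iota //; lia.
move: Hg1 => /orP [/allP H|/allP H].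
  by have := H _ H1; move: Na Ha; lia.
by have := H _ H2; move: Nb Ha; lia.
Qed.

Lemma asc_cons a w : asc (a :: w) = (a < head a w) + asc w.
Proof.
case: w => [|b w]; first by rewrite /asc /= !big_ord0 ltnn.
rewrite /asc big_ord_recl /=; congr (_ + _); try (apply: eq_bigr => i _; rewrite lift0 /=).
Qed.

Lemma des_cons a w : des (a :: w) = (head a w < a) + des w.
Proof.
case: w => [|b w]; first by rewrite /des /= !big_ord0 ltnn.
rewrite /des big_ord_recl /=; congr (_ + _); try (apply: eq_bigr => i _; rewrite lift0 /=).
Qed.

Lemma rlmax_cons a w : rlmax (a :: w) = all (fun y => y < a) w + rlmax w.
Proof.
rewrite /rlmax big_ord_recl /= drop0; congr (_ + _).

Qed.

Lemma rlmin_cons a w : rlmin (a :: w) = all (fun y => a < y) w + rlmin w.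
Proof.
rewrite /rlmin big_ord_recl /= drop0; congr (_ + _).

Qed.

Lemma lrmax_min a w : all (fun y => a < y) w -> lrmax (a :: w) = (lrmax w).+1.
Proof.
move=> /allP H.
rewrite /lrmax big_ord_recl /= add1n; congr (_.+1).
apply: eq_bigr => i _; rewrite /= H //.
by rewrite add0n; apply: mem_nth; exact: (ltn_ord i).
Qed.

Lemma lrmax_max a w : all (fun y => y < a) w -> lrmax (a :: w) = 1.
Proof.
move=> /allP H.
rewrite /lrmax big_ord_recl /= big1 // => i _.
rewrite /=.
have : nth 0 w i < a by apply: H; rewrite ?add0n; apply: mem_nth; exact: (ltn_ord i).
by case: ltngtP.
Qed.

Lemma lrmin_max a w : all (fun y => y < a) w -> lrmin (a :: w) = (lrmin w).+1.
Proof.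
move=> /allP H.
rewrite /lrmin big_ord_recl /= add1n; congr (_.+1).
apply: eq_bigr => i _; rewrite /= H //.
by rewrite add0n; apply: mem_nth; exact: (ltn_ord i).
Qed.

Lemma lrmin_min a w : all (fun y => a < y) w -> lrmin (a :: w) = 1.
Proof.
move=> /allP H.
rewrite /lrmin big_ord_recl /= big1 // => i _.
rewrite /=.
have : a < nth 0 w i by apply: H; rewrite ?add0n; apply: mem_nth; exact: (ltn_ord i).
by case: ltngtP.
Qed.

Fixpoint leadS (c : seq bool) : nat := if c is true :: c' then (leadS c').+1 else 0.
Fixpoint leadL (c : seq bool) : nat := if c is false :: c' then (leadL c').+1 else 0.

Lemma all_up lo c : all (fun y => lo < y) (build lo.+1 c).
Proof. by apply/allP => x /build_mem; lia. Qed.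

Lemma all_dn lo c : all (fun y => y < lo + (size c).+1) (build lo c).
Proof. by apply/allP => x /build_mem; lia. Qed.

Lemma all_not_up lo c : all (fun y => y < lo) (build lo.+1 c) = false.
Proof.
apply/negbTE/negP => /allP /(_ _ (build_head lo.+1 c 0)) H.
by have /allP /(_ _ (build_head lo.+1 c 0)) := all_up lo c; lia.
Qed.

Lemma all_not_dn lo c : all (fun y => lo + (size c).+1 < y) (build lo c) = false.
Proof.
apply/negbTE/negP => /allP /(_ _ (build_head lo c 0)) H.
by have /allP /(_ _ (build_head lo c 0)) := all_dn lo c; lia.
Qed.

Lemma head_up lo c : lo < head lo (build lo.+1 c).
Proof. by have /allP /(_ _ (build_head lo.+1 c lo)) := all_up lo c. Qed.

Lemma head_dn lo c : head (lo + (size c).+1) (build lo c) < lo + (size c).+1.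
Proof. by have /allP /(_ _ (build_head lo c (lo + (size c).+1))) := all_dn lo c. Qed.

Lemma build_asc lo c : asc (build lo c) = count id c.
Proof.
elim: c lo => [|[] c IH] lo; first by rewrite /asc /= big_ord0.
  by rewrite [build _ _]/= asc_cons head_up IH.
rewrite [build _ _]/= asc_cons IH.
by have := head_dn lo c; case: ltngtP.
Qed.

Lemma build_des lo c : des (build lo c) = count negb c.
Proof.
elim: c lo => [|[] c IH] lo; first by rewrite /des /= big_ord0.
  rewrite [build _ _]/= des_cons IH.
  by have := head_up lo c; case: ltngtP.
by rewrite [build _ _]/= des_cons head_dn IH.
Qed.

Lemma build_rlmax lo c : rlmax (build lo c) = (count negb c).+1.
Proof.
elim: c lo => [|[] c IH] lo; first by rewrite /rlmax /= big_ord1.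
  by rewrite [build _ _]/= rlmax_cons all_not_up IH.
by rewrite [build _ _]/= rlmax_cons all_dn IH.
Qed.

Lemma build_rlmin lo c : rlmin (build lo c) = (count id c).+1.
Proof.
elim: c lo => [|[] c IH] lo; first by rewrite /rlmin /= big_ord1.
  by rewrite [build _ _]/= rlmin_cons all_up IH.
by rewrite [build _ _]/= rlmin_cons all_not_dn IH.
Qed.

Lemma build_lrmax lo c : lrmax (build lo c) = (leadS c).+1.
Proof.
elim: c lo => [|[] c IH] lo; first by rewrite /lrmax /= big_ord1.
  by rewrite [build _ _]/= lrmax_min ?all_up // IH.
by rewrite [build _ _]/= lrmax_max ?all_dn.
Qed.

Lemma build_lrmin lo c : lrmin (build lo c) = (leadL c).+1.
Proof.
elim: c lo => [|[] c IH] lo; first by rewrite /lrmin /= big_ord1.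
  by rewrite [build _ _]/= lrmin_min ?all_up.
by rewrite [build _ _]/= lrmin_max ?all_dn // IH.
Qed.

Lemma size_pword n (pi : 'S_n) : size (pword pi) = n.
Proof. by rewrite /pword size_map size_enum_ord. Qed.

Lemma nth_pword n (pi : 'S_n) (i : 'I_n) : nth 0 (pword pi) i = pi i.
Proof. by rewrite /pword (nth_map i) ?size_enum_ord // nth_ord_enum. Qed.

Lemma pword_perm n (pi : 'S_n) : perm_eq (pword pi) (iota 0 n).
Proof.
apply: uniq_perm; first by rewrite /pword map_inj_uniq ?enum_uniq // => i j /val_inj /perm_inj.
  exact: iota_uniq.
move=> x; rewrite mem_iota add0n; apply/idP/idP.
  by move=> /mapP [i _ ->]; apply: ltn_ord.
move=> Hx; apply/mapP; exists ((pi^-1)%g (Ordinal Hx)); first by rewrite mem_enum.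
by rewrite permKV.
Qed.

Lemma pword_inj n : injective (@pword n).
Proof.
move=> p1 p2 E; apply/permP => i; apply: val_inj.
by rewrite -[LHS]nth_pword -[RHS]nth_pword E.
Qed.

Lemma pword_surj n w : perm_eq w (iota 0 n) -> exists pi : 'S_n, pword pi = w.
Proof.
move=> Hp.
have Hs : size w = n by rewrite (perm_size Hp) size_iota.
have Hu : uniq w by rewrite (perm_uniq Hp) iota_uniq.
have Hlt : forall i, i < n -> nth 0 w i < n.
  move=> i Hi; have : nth 0 w i \in iota 0 n by rewrite -(perm_mem Hp) mem_nth // Hs.
  by rewrite mem_iota.
pose f (i : 'I_n) : 'I_n := insubd i (nth 0 w i).
have Hf : forall i, val (f i) = nth 0 w i by move=> i; rewrite val_insubd Hlt.
have finj : injective f.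
  move=> i j E; apply: val_inj; have := congr1 val E; rewrite !Hf.
  by move/eqP; rewrite nth_uniq ?Hs // => /eqP.
exists (perm finj); apply: (@eq_from_nth _ 0); first by rewrite size_pword Hs.
move=> i; rewrite size_pword => Hi.
by rewrite (@nth_pword n _ (Ordinal Hi)) permE Hf.
Qed.

Definition badw (w : seq nat) := exists i j k,
  [/\ i < j, i < k, j < size w, k < size w & nth 0 w j < nth 0 w i < nth 0 w k].

Lemma goodr_nbad w : goodr w -> ~ badw w.
Proof.
elim: w => [|a w IH] /=.
  by move=> _ [i [j [k [_ _ Hj _ _]]]].
move=> /andP [H1 H2] [[|i] [[|j] [[|k] [Hij Hik Hj Hk Hv]]]] //.
  move: H1 => /orP [/allP H|/allP H].
    have := H (nth 0 w j) (mem_nth 0 (Hj : j < size w)); move: Hv => /=; lia.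
  have := H (nth 0 w k) (mem_nth 0 (Hk : k < size w)); move: Hv => /=; lia.
apply: IH => //; exists i, j, k; split => //.
Qed.

Lemma ngoodr_bad w : ~~ goodr w -> badw w.
Proof.
elim: w => [|a w IH] //=.
rewrite negb_and => /orP [H|/IH [i [j [k [Hij Hik Hj Hk Hv]]]]].
  move: H; rewrite negb_or => /andP [/allPn [y Hy Hy'] /allPn [z Hz Hz']].
  exists 0, (index y w).+1, (index z w).+1; split => //=; rewrite ?ltnS ?index_mem //.
  by rewrite !nth_index //; lia.
by exists i.+1, j.+1, k.+1; split.
Qed.

Lemma perm_val_neq n (pi : 'S_n) (i j : 'I_n) : i != j -> nat_of_ord (pi i) != nat_of_ord (pi j).
Proof. by move=> H; apply: contra H => /eqP /val_inj /perm_inj ->. Qed.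

Lemma contains_bad n (pi : 'S_n) :
  contains pi [:: 2; 1; 3] || contains pi [:: 2; 3; 1] -> badw (pword pi).
Proof.
have o0 : (0 < 3) by []. have o1 : (1 < 3) by []. have o2 : (2 < 3) by [].
move=> /orP [] /existsP [f /forallP H].
- have /andP [A1 B1] := forallP (H (Ordinal o0)) (Ordinal o1).
  have /andP [A2 B2] := forallP (H (Ordinal o0)) (Ordinal o2).
  move: A1 B1 A2 B2 => /= A1 B1 A2 B2.
  set i := f (Ordinal o0) in A1 B1 A2 B2 *.
  set j := f (Ordinal o1) in A1 B1 A2 B2 *.
  set k := f (Ordinal o2) in A1 B1 A2 B2 *.
  have Nij : i != j by rewrite neq_ltn A1.
  have Hn := @perm_val_neq n pi i j Nij.
  exists (val i), (val j), (val k); rewrite size_pword !nth_pword; split => //; try apply: ltn_ord.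
  move: B1 B2 => /= /eqP /negbT B1 /eqP B2; rewrite -leqNgt in B1. lia.
- have /andP [A1 B1] := forallP (H (Ordinal o0)) (Ordinal o1).
  have /andP [A2 B2] := forallP (H (Ordinal o0)) (Ordinal o2).
  move: A1 B1 A2 B2 => /= A1 B1 A2 B2.
  set i := f (Ordinal o0) in A1 B1 A2 B2 *.
  set j := f (Ordinal o1) in A1 B1 A2 B2 *.
  set k := f (Ordinal o2) in A1 B1 A2 B2 *.
  have Nik : i != k by rewrite neq_ltn A2.
  have Hn := @perm_val_neq n pi i k Nik.
  exists (val i), (val k), (val j); rewrite size_pword !nth_pword; split => //; try apply: ltn_ord.
  move: B1 B2 => /= /eqP B1 /eqP /negbT B2; rewrite -leqNgt in B2; lia.
Qed.

Lemma c12 : (1 < 2) = true. Proof. by []. Qed.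
Lemma c13 : (1 < 3) = true. Proof. by []. Qed.
Lemma c23 : (2 < 3) = true. Proof. by []. Qed.
Lemma c21 : (2 < 1) = false. Proof. by []. Qed.
Lemma c31 : (3 < 1) = false. Proof. by []. Qed.
Lemma c32 : (3 < 2) = false. Proof. by []. Qed.
Ltac FIN := try (apply/andP; split; first lia); apply/eqP;
  rewrite ?c12 ?c13 ?c23 ?c21 ?c31 ?c32; (apply/negbTE; rewrite -leqNgt; lia) || lia.

Lemma bad_contains n (pi : 'S_n) :
  badw (pword pi) -> contains pi [:: 2; 1; 3] || contains pi [:: 2; 3; 1].
Proof.
move=> [i [j [k [Hij Hik Hj Hk Hv]]]].
rewrite size_pword in Hj Hk.
have Hi : i < n by lia.
move: Hv; rewrite -[i]/(nat_of_ord (Ordinal Hi)) -[j]/(nat_of_ord (Ordinal Hj)).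
rewrite -[k]/(nat_of_ord (Ordinal Hk)) !nth_pword.
set I := Ordinal Hi; set J := Ordinal Hj; set K := Ordinal Hk => Hv.
have HIJ : (I < J)%N by []. have HIK : (I < K)%N by [].
have [HJK|HKJ|EJK] := ltngtP j k; last first.
  have EJ : J = K by apply: val_inj.
  by move: Hv; rewrite EJ; lia.
- apply/orP; right; apply/existsP.
  exists [ffun a : 'I_(size [:: 2; 3; 1]) => nth I [:: I; K; J] a].
  apply/forallP => -[[|[|[|a]]] Ha] //; apply/forallP => -[[|[|[|b]]] Hb] //;
    rewrite !ffunE /= ?ltnn ?eqxx //=; FIN.
- apply/orP; left; apply/existsP.
  exists [ffun a : 'I_(size [:: 2; 1; 3]) => nth I [:: I; J; K] a].
  apply/forallP => -[[|[|[|a]]] Ha] //; apply/forallP => -[[|[|[|b]]] Hb] //;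
    rewrite !ffunE /= ?ltnn ?eqxx //=; FIN.
Qed.
Set Implicit Arguments. Unset Strict Implicit.

Fixpoint bseqs m : seq (seq bool) :=
  if m is m'.+1 then map (cons true) (bseqs m') ++ map (cons false) (bseqs m')
  else [:: [::]].

Lemma consb_inj (b : bool) : injective (cons b).
Proof. by move=> x y [->]. Qed.

Lemma mem_bseqs m c : (c \in bseqs m) = (size c == m).
Proof.
elim: m c => [|m IH] c; first by case: c.
rewrite [bseqs _]/= mem_cat.
case: c => [|b c].
  by apply/negbTE; rewrite negb_or; apply/andP; split; apply/negP => /mapP [? _].
case: b.
  rewrite (mem_map (@consb_inj _)) IH /=.
  have -> : (true :: c \in [seq false :: i | i <- bseqs m]) = false.
    by apply/negbTE/negP => /mapP [? _].
  by rewrite orbF.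
rewrite (mem_map (@consb_inj _)) IH /=.
have -> : (false :: c \in [seq true :: i | i <- bseqs m]) = false.
  by apply/negbTE/negP => /mapP [? _].
by [].
Qed.

Lemma bseqs_uniq m : uniq (bseqs m).
Proof.
elim: m => [|m IH] //=.
rewrite cat_uniq !(map_inj_uniq (@consb_inj _)) IH /= andbT.
by apply/hasPn => c /mapP [c' _ ->]; apply/negP => /mapP [? _].
Qed.

Local Open Scope ring_scope.

Definition Wt (R : comRingType) (p q u v s t : R) (w : seq nat) : R :=
  p ^+ asc w * q ^+ des w * u ^+ lrmax w * v ^+ rlmax w * s ^+ lrmin w * t ^+ rlmin w.

Lemma avoid_good n (pi : 'S_n) :
  avoids pi [:: 2; 1; 3]%N && avoids pi [:: 2; 3; 1]%N = goodr (pword pi).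
Proof.
rewrite /avoids -negb_or.
case E: (goodr (pword pi)).
  apply/negP => /contains_bad; exact: goodr_nbad E.
by apply/negbF/bad_contains/ngoodr_bad; rewrite E.
Qed.

Lemma Fcoef_words (R : comRingType) (p q u v s t : R) m :
  Fcoef p q u v s t m.+1 = \sum_(c <- bseqs m) Wt p q u v s t (build 0 c).
Proof.
rewrite /Fcoef (eq_bigl _ _ (@avoid_good m.+1)).
transitivity (\sum_(i : 'S_m.+1 | goodr (pword i)) Wt p q u v s t (pword i)); first by [].
rewrite -(big_map (@pword m.+1) goodr (Wt p q u v s t)) -big_filter.
rewrite (_ : \sum_(c <- bseqs m) _ = \sum_(w <- map (build 0) (bseqs m)) Wt p q u v s t w); last by rewrite big_map.
apply: perm_big; apply: uniq_perm.
- by rewrite filter_uniq // map_inj_uniq ?index_enum_uniq //; exact: pword_inj.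
- by rewrite map_inj_uniq ?bseqs_uniq //; exact: build_inj.
move=> w; rewrite mem_filter; apply/andP/mapP.
  move=> [Hg /mapP [pi _ Epi]].
  have Hp : perm_eq w (iota 0 m.+1) by rewrite Epi pword_perm.
  have [c [Hc Ew]] := @build_char 0 m w Hg Hp.
  by exists c; rewrite ?mem_bseqs ?Hc.
move=> [c Hc ->]; split; first exact: build_good.
have Hp := build_perm 0 c; move: Hc; rewrite mem_bseqs => /eqP Hc; rewrite Hc in Hp.
have [pi Epi] := @pword_surj m.+1 _ Hp.
by rewrite -Epi map_f // mem_index_enum.
Qed.

Section Sums.
Variables (R : comRingType) (p q u v s t : R).

Definition ST m := \sum_(c <- bseqs m) (p*t) ^+ count id c * (q*v) ^+ count negb c.
Definition SU m := \sum_(c <- bseqs m) (p*t) ^+ count id c * (q*v) ^+ count negb c * u ^+ leadS c.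
Definition SV m := \sum_(c <- bseqs m) (p*t) ^+ count id c * (q*v) ^+ count negb c * s ^+ leadL c.
Definition SQ m := \sum_(c <- bseqs m)
   (p*t) ^+ count id c * (q*v) ^+ count negb c * u ^+ leadS c * s ^+ leadL c.

Lemma ST0 : ST 0 = 1. Proof. by rewrite /ST big_seq1 /= !expr0 mulr1. Qed.
Lemma SU0 : SU 0 = 1. Proof. by rewrite /SU big_seq1 /= !expr0 !mulr1. Qed.
Lemma SV0 : SV 0 = 1. Proof. by rewrite /SV big_seq1 /= !expr0 !mulr1. Qed.
Lemma SQ0 : SQ 0 = 1. Proof. by rewrite /SQ big_seq1 /= !expr0 !mulr1. Qed.

Lemma ST_rec m : ST m.+1 = p*t * ST m + q*v * ST m.
Proof.
rewrite /ST [bseqs _]/= big_cat !big_map !mulr_sumr; congr (_ + _);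
  apply: eq_bigr => c _ /=; rewrite ?exprS; ring.
Qed.

Lemma SU_rec m : SU m.+1 = p*t*u * SU m + q*v * ST m.
Proof.
rewrite /SU /ST [bseqs _]/= big_cat !big_map !mulr_sumr; congr (_ + _);
  apply: eq_bigr => c _ /=; rewrite ?exprS ?expr0; ring.
Qed.

Lemma SV_rec m : SV m.+1 = p*t * ST m + q*v*s * SV m.
Proof.
rewrite /SV /ST [bseqs _]/= big_cat !big_map !mulr_sumr; congr (_ + _);
  apply: eq_bigr => c _ /=; rewrite ?exprS ?expr0; ring.
Qed.

Lemma SQ_rec m : SQ m.+1 = p*t*u * SU m + q*v*s * SV m.
Proof.
rewrite /SQ /SU /SV [bseqs _]/= big_cat !big_map !mulr_sumr; congr (_ + _);
  apply: eq_bigr => c _ /=; rewrite ?exprS ?expr0; ring.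
Qed.

Lemma Wt_build c : Wt p q u v s t (build 0 c) =
  u * v * s * t * ((p*t) ^+ count id c * (q*v) ^+ count negb c * u ^+ leadS c * s ^+ leadL c).
Proof.
rewrite /Wt build_asc build_des build_lrmax build_rlmax build_lrmin build_rlmin.
rewrite !exprS !exprMn; ring.
Qed.

Lemma Fcoef_S m : Fcoef p q u v s t m.+1 = u * v * s * t * SQ m.
Proof.
by rewrite Fcoef_words /SQ mulr_sumr; apply: eq_bigr => c _; rewrite Wt_build.
Qed.

End Sums.

Lemma Fcoef_0 (R : comRingType) (p q u v s t : R) : Fcoef p q u v s t 0 = 1.
Proof.
have E : forall pi : 'S_0, pword pi = [::] by move=> pi; apply: size0nil; rewrite size_pword.
rewrite /Fcoef (eq_bigl _ _ (@avoid_good 0)).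
rewrite (eq_bigl xpredT) => [|pi]; last by rewrite E.
rewrite (eq_bigr (fun _ => 1)) => [|pi _]; last first.
  by rewrite E /asc /des /lrmax /rlmax /lrmin /rlmin /= !big_ord0 !expr0 !mulr1.
by rewrite sumr_const card_Sn.
Qed.
Unset Implicit Arguments.
Local Open Scope ring_scope.

Lemma coefCXM (R : comRingType) (c : R) (P : {poly R}) n k :
  (c%:P * 'X^n * P)`_k = c * (if (k < n)%N then 0 else P`_(k - n)).
Proof. by rewrite -mulrA coefCM coefXnM. Qed.

Lemma coef4 (R : comRingType) (c0 c1 c2 c3 : R) (P : {poly R}) k :
  ((c0%:P * 'X^0 + c1%:P * 'X^1 + c2%:P * 'X^2 + c3%:P * 'X^3) * P)`_k =
  c0 * P`_k + c1 * (if (k < 1)%N then 0 else P`_(k - 1))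
  + c2 * (if (k < 2)%N then 0 else P`_(k - 2)) + c3 * (if (k < 3)%N then 0 else P`_(k - 3)).
Proof.
by rewrite !mulrDl !coefD !coefCXM /= subn0.
Qed.

Lemma coefFt (R : comRingType) (p q u v s t : R) N j :
  (j <= N)%N -> (Ftrunc p q u v s t N)`_j = Fcoef p q u v s t j.
Proof.
move=> Hj; rewrite /Ftrunc coef_sum.
have Hj' : (j < N.+1)%N by [].
rewrite (bigD1 (Ordinal Hj')) //= coefCM coefXn eqxx mulr1 big1 ?addr0 // => i Hi.
rewrite coefCM coefXn; case: eqP => [E|]; last by rewrite mulr0.
by move: Hi; rewrite (_ : i = Ordinal Hj') ?eqxx //; apply: val_inj.
Qed.

Section Main.
Variables (R : comRingType) (p q u v s t : R).

Lemma Aden_form : Aden p q u v s t =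
  (1 : R)%:P * 'X^0 + (- (p*t*u + (p*t + q*v) + q*s*v))%:P * 'X^1
  + (p*t*u * (p*t + q*v) + p*t*u * (q*s*v) + (p*t + q*v) * (q*s*v))%:P * 'X^2
  + (- (p*t*u * (p*t + q*v) * (q*s*v)))%:P * 'X^3.
Proof. rewrite /Aden /mon; ring. Qed.

Lemma Anum_form : Anum p q u v s t =
  ((1 : R)%:P * 'X^0
  + (- (p*t) - p*t*u - q*v - q*s*v + s*t*u*v)%:P * 'X^1
  + (p^+2*t^+2*u + p*q*s*t*v + p*q*t*u*v + p*q*s*t*u*v - p*s*t^+2*u*v + q^+2*s*v^+2
     - q*s*t*u*v^+2)%:P * 'X^2
  + (- (p^+2*q*s*t^+2*u*v) - p*q^+2*s*t*u*v^+2 + p*q*s^+2*t^+2*u*v^+2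
     + p*q*s*t^+2*u^+2*v^+2 - p*q*s^+2*t^+2*u^+2*v^+2)%:P * 'X^3) * 1.
Proof. rewrite /Anum /mon; ring. Qed.

End Main.

Theorem theorem9 (R : comRingType) (p q u v s t : R) (N k : nat) :
  (k <= N)%N ->
  (Aden p q u v s t * Ftrunc p q u v s t N)`_k = (Anum p q u v s t)`_k.
Proof.
move=> HkN.
rewrite Aden_form Anum_form !coef4 !coef1.
case: k HkN => [|[|[|[|[|m]]]]] HkN /=.
all: rewrite ?subn0 ?subSS.
all: rewrite ?coefFt; try lia.
all: rewrite ?Fcoef_0 ?Fcoef_S.
all: rewrite ?SQ_rec ?SU_rec ?SV_rec ?ST_rec ?SQ0 ?SU0 ?SV0 ?ST0.
all: ring.
Qed.
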